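(* Let $\models$ be an intersective mixed consequence truth-relation on a finite set $V$ of truth values (constant expressive setting). If $\models$ admits a G-negation, then every minimal representation $\models_{\mathcal{D}_p^1,\mathcal{D}_c^1}\cap\dots\cap\models_{\mathcal{D}_p^K,\mathcal{D}_c^K}$ of $\models$ satisfies: (N1) for $i\neq j$ there is no inclusion $\mathcal{D}_p^i\subseteq\mathcal{D}_p^j$ nor $\mathcal{D}_c^i\subseteq\mathcal{D}_c^j$; (N2) for all $i,j$: if $\mathcal{D}_p^i\subseteq\mathcal{D}_c^j$ then $\mathcal{D}_p^j\subseteq\mathcal{D}_c^i$, and if $\mathcal{D}_c^j\subseteq\mathcal{D}_p^i$ then $\mathcal{D}_c^i\subseteq\mathcal{D}_p^j$.
   Context: $V$ contains distinct $1,0$; sets of designated values: $\mathcal{D}\subseteq V$, $1\in\mathcal{D}$, $0\notin\mathcal{D}$. $\gamma\models_{\mathcal{D}_p,\mathcal{D}_c}\delta$ iff ($\gamma\subseteq\mathcal{D}_p\Rightarrow\delta\cap\mathcal{D}_c\neq\emptyset$). An intersective mixed truth-relation is a finite intersection of such; a representation is a list of mixed relations whose intersection it is, minimal if of least possible length. Semantics: valuations mapping atoms to $V$, connectives interpreted by fixed truth functions, extended compositionally, every assignment to finitely many distinct atoms realized; constant expressive: every value is the constant value of some formula. $\Gamma\vdash\Delta$ iff $v(\Gamma)\models v(\Delta)$ for all $v$. A G-negation is a unary connective $\neg$ (interpreted by some truth function) with, for all $\Gamma,\Delta,A$: $\Gamma\cup\{\neg A\}\vdash\Delta$ iff $\Gamma\vdash\{A\}\cup\Delta$;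 and $\Gamma\vdash\{\neg A\}\cup\Delta$ iff $\Gamma\cup\{A\}\vdash\Delta$. *)

(* Defs.v *)
From mathcomp Require Import all_boot.
Set Implicit Arguments. Unset Strict Implicit. Unset Printing Implicit Defensive.

Definition designated (V : finType) (one zero : V) (D : {set V}) : bool :=
  (one \in D) && (zero \notin D).

Definition truth_rel (V : finType) := (V -> Prop) -> (V -> Prop) -> Prop.

Definition mixed (V : finType) (Dp Dc : {set V}) : truth_rel V :=
  fun gamma delta =>
    (forall x, gamma x -> x \in Dp) -> exists2 x, delta x & x \in Dc.

Definition represents (V : finType) (one zero : V) (R : truth_rel V)
    (s : seq ({set V} * {set V})) : Prop :=
  (forall p, p \in s -> designated one zero p.1 /\ designated one zero p.2) /\
  (forall gamma delta, R gamma delta <-> (forall p, p \in s -> mixed p.1 p.2 gamma delta)).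

Definition intersective (V : finType) (one zero : V) (R : truth_rel V) : Prop :=
  exists2 s, 0 < size s & represents one zero R s.

Definition minimal_representation (V : finType) (one zero : V) (R : truth_rel V)
    (s : seq ({set V} * {set V})) : Prop :=
  represents one zero R s /\
  (forall s', represents one zero R s' -> size s <= size s').

Inductive form (C : Type) (ar : C -> nat) : Type :=
| Atom : nat -> form ar
| App : forall c : C, ('I_(ar c) -> form ar) -> form ar.

Fixpoint eval (C : Type) (ar : C -> nat) (V : Type)
    (I : forall c : C, ('I_(ar c) -> V) -> V) (v : nat -> V) (f : form ar) : V :=
  match f with
  | Atom n => v n
  | App c args => I c (fun i => eval I v (args i))
  end.

Definition constant_expressive (C : Type) (ar : C -> nat) (V : Type)
    (I : forall c : C, ('I_(ar c) -> V) -> V) : Prop :=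
  forall a : V, exists phi : form ar, forall v : nat -> V, eval I v phi = a.

Definition fset_ (C : Type) (ar : C -> nat) := form ar -> Prop.

Definition img (C : Type) (ar : C -> nat) (V : Type)
    (I : forall c : C, ('I_(ar c) -> V) -> V) (v : nat -> V) (G : fset_ ar) : V -> Prop :=
  fun x => exists2 A, G A & eval I v A = x.

Definition conseq (C : Type) (ar : C -> nat) (V : finType)
    (I : forall c : C, ('I_(ar c) -> V) -> V) (R : truth_rel V)
    (G D : fset_ ar) : Prop :=
  forall v : nat -> V, R (img I v G) (img I v D).

Definition addf (C : Type) (ar : C -> nat) (G : fset_ ar) (A : form ar) : fset_ ar :=
  fun B => G B \/ B = A.

Definition negf (C : Type) (ar : C -> nat) (neg : C) (A : form ar) : form ar :=
  App (fun _ : 'I_(ar neg) => A).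

Definition G_negation (C : Type) (ar : C -> nat) (V : finType)
    (I : forall c : C, ('I_(ar c) -> V) -> V) (R : truth_rel V) (neg : C) : Prop :=
  ar neg = 1 /\
  forall (G D : fset_ ar) (A : form ar),
    (conseq I R (addf G (negf neg A)) D <-> conseq I R G (addf D A)) /\
    (conseq I R G (addf D (negf neg A)) <-> conseq I R (addf G A) D).

(* Main.v *)
From Stdlib Require Import Classical.
Require Import Defs.
From mathcomp Require Import all_boot.
From mathcomp Require Import zify.
Set Implicit Arguments. Unset Strict Implicit. Unset Printing Implicit Defensive.

Section Core.
Variables (V : finType) (one zero : V) (R : truth_rel V) (s : seq ({set V} * {set V})).
Hypothesis Hrep : represents one zero R s.
Hypothesis Hsz : forall s', represents one zero R s' -> size s <= size s'.

Local Notation P k := (nth (set0, set0) s k).1.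
Local Notation Cc k := (nth (set0, set0) s k).2.

Lemma mixed_mono (P1 C1 P2 C2 : {set V}) g d :
  P1 \subset P2 -> C2 \subset C1 -> mixed P2 C2 g d -> mixed P1 C1 g d.
Proof.
move=> sP sC H Hg. have [x dx xC] := H (fun x gx => subsetP sP x (Hg x gx)).
by exists x => //; apply: (subsetP sC).
Qed.

Lemma core i j : i < size s -> j < size s -> P i \subset P j -> Cc j \subset Cc i -> i = j.
Proof.
move=> ilt jlt sP sC; apply/eqP; apply/negPn/negP => nij.
set s' := take i s ++ drop i.+1 s.
have Hs : s = take i s ++ nth (set0,set0) s i :: drop i.+1 s
  by rewrite -drop_nth // cat_take_drop.
have sub : forall p, p \in s' -> p \in s.
  move=> p; rewrite [in X in _ -> X]Hs !mem_cat in_cons => /orP[->|->] //.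
  by rewrite !orbT.
have jin : nth (set0,set0) s j \in s'.
  rewrite mem_cat; case: (ltngtP j i) => hji.
  - by rewrite -(nth_take _ hji) mem_nth // size_take ilt.
  - apply/orP; right. have -> : j = i.+1 + (j - i.+1) by rewrite subnKC.
    rewrite -nth_drop mem_nth // size_drop; exact: ltn_sub2r (leq_ltn_trans hji jlt) jlt.
  - by rewrite hji eqxx in nij.
have rep' : represents one zero R s'.
  split; first by move=> p /sub; apply Hrep.1.
  move=> g d; split.
    by move=> /(Hrep.2 _ _) H p ps; apply: H; apply: sub.
  move=> H; apply/(Hrep.2 _ _) => p.
  rewrite [in X in X -> _]Hs mem_cat in_cons => /orP[pt|/orP[/eqP->|pd]].
  - by apply: H; rewrite mem_cat pt.
  - exact: mixed_mono sP sC (H _ jin).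
  - by apply: H; rewrite mem_cat pd orbT.
have := Hsz rep'. rewrite size_cat size_take size_drop ilt. lia.
Qed.

Definition Rs (X Y : {set V}) := R (fun x => x \in X) (fun y => y \in Y).

Lemma R_ext g d g' d' : (forall x, g x <-> g' x) -> (forall x, d x <-> d' x) -> R g d -> R g' d'.
Proof.
move=> eg ed /(Hrep.2 _ _) H; apply/(Hrep.2 _ _) => p ps Hg.
have [x dx xC] := H p ps (fun x gx => Hg x ((eg x).1 gx)).
by exists x => //; apply/ed.
Qed.

Lemma notRs (X Y : {set V}) : ~ Rs X Y ->
  exists2 k, k < size s & (X \subset P k) && [forall y in Y, y \notin Cc k].
Proof.
move=> nR; apply: NNPP => nE; apply: nR; apply/(Hrep.2 _ _) => p ps.
have [k klt ->] : exists2 k, k < size s & p = nth (set0,set0) s k.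
  by exists (index p s); rewrite ?index_mem ?nth_index.
move=> Hg. case: (boolP [exists y in Y, y \in Cc k]) => [/existsP[y /andP[yY yC]]|nex].
  by exists y.
exfalso; apply: nE; exists k => //; apply/andP; split.
  by apply/subsetP => x; apply: Hg.
apply/forallP => y; apply/implyP => yY; apply/negP => yC; move/negP: nex; apply.
by apply/existsP; exists y; rewrite yY.
Qed.

Lemma F0 k (X Y : {set V}) : k < size s -> X \subset P k -> (forall y, y \in Y -> y \notin Cc k) -> ~ Rs X Y.
Proof.
move=> klt sX hY /(Hrep.2 _ _) H.
have [y yY yC] := H _ (mem_nth _ klt) (fun x xX => subsetP sX x xX).
by move: (hY y yY); rewrite yC.
Qed.

Lemma M k (X Y : {set V}) : k < size s -> ~ Rs X Y -> P k \subset X ->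
  (forall y, y \notin Cc k -> y \in Y) ->
  X \subset P k /\ (forall y, y \in Y -> y \notin Cc k).
Proof.
move=> klt /notRs [m mlt /andP[sX /forallP hY]] sPX hC.
have e : k = m.
  apply: core => //; first exact: subset_trans sPX sX.
  apply/subsetP => y yCm; apply/negPn/negP => ynC.
  by move: (implyP (hY y) (hC y ynC)); rewrite yCm.
subst m; split => // y yY; exact: (implyP (hY y) yY).
Qed.

Variables (C : Type) (ar : C -> nat) (I : forall c : C, ('I_(ar c) -> V) -> V).
Hypothesis Hce : constant_expressive I.
Variable neg : C.
Hypothesis Hneg : G_negation I R neg.

Definition n (a : V) : V := @I neg (fun _ => a).

Definition cset (X : {set V}) : fset_ ar :=
  fun B => exists2 b, b \in X & forall v, eval I v B = b.

Lemma img_cset (X : {set V}) v x : img I v (cset X) x <-> x \in X.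
Proof.
split; first by case=> A [b bX Hb] <-; rewrite Hb.
move=> xX; have [phi Hphi] := Hce x; exists phi => //; exists x => //.
Qed.

Lemma conseq_char G D (X Y : {set V}) : (forall v x, img I v G x <-> x \in X) ->
  (forall v x, img I v D x <-> x \in Y) -> (conseq I R G D <-> Rs X Y).
Proof.
move=> hG hD; split.
  move=> H; apply: (R_ext _ _ (H (fun _ => one))) => x; [exact: hG | exact: hD].
move=> H v; apply: (R_ext _ _ H) => x; [exact: iff_sym (hG v x) | exact: iff_sym (hD v x)].
Qed.

Lemma img_addf G A v x : img I v (addf G A) x <-> img I v G x \/ eval I v A = x.
Proof.
split; first by case=> B [GB|->] <-; [left; exists B|right].
case=> [[B GB <-]|<-]; [exists B => //; left | exists A => //; right] => //.
Qed.

Lemma img_addc (X : {set V}) A b : (forall v, eval I v A = b) ->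
  forall v x, img I v (addf (cset X) A) x <-> x \in b |: X.
Proof.
move=> eA v x; rewrite in_setU1; split.
  case/img_addf => [/img_cset ->|]; first by rewrite orbT.
  by rewrite eA => <-; rewrite eqxx.
case/orP => [/eqP->|xX]; apply/img_addf; [right; exact: eA | left; exact/img_cset].
Qed.

Lemma eN a phi : (forall v, eval I v phi = a) -> forall v, eval I v (negf neg phi) = n a.
Proof. by move=> Hphi v; rewrite /negf /= Hphi. Qed.

Lemma NL1 a (X Y : {set V}) : Rs (n a |: X) Y <-> Rs X (a |: Y).
Proof.
have [phi Hphi] := Hce a.
have [_ H] := Hneg. have [H1 _] := H (cset X) (cset Y) phi.
have hA : conseq I R (addf (cset X) (negf neg phi)) (cset Y) <-> Rs (n a |: X) Y.
  apply: conseq_char; [exact: img_addc (eN Hphi) | exact: img_cset].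
have hB : conseq I R (cset X) (addf (cset Y) phi) <-> Rs X (a |: Y).
  apply: conseq_char; [exact: img_cset | exact: img_addc Hphi].
tauto.
Qed.

Lemma NL2 a (X Y : {set V}) : Rs X (n a |: Y) <-> Rs (a |: X) Y.
Proof.
have [phi Hphi] := Hce a.
have [_ H] := Hneg. have [_ H2] := H (cset X) (cset Y) phi.
have hA : conseq I R (cset X) (addf (cset Y) (negf neg phi)) <-> Rs X (n a |: Y).
  apply: conseq_char; [exact: img_cset | exact: img_addc (eN Hphi)].
have hB : conseq I R (addf (cset X) phi) (cset Y) <-> Rs (a |: X) Y.
  apply: conseq_char; [exact: img_addc Hphi | exact: img_cset].
tauto.
Qed.

Lemma nC k y : y \in ~: Cc k -> y \notin Cc k.
Proof. by rewrite in_setC. Qed.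

Lemma a1 k x : k < size s -> x \in P k -> n x \notin Cc k.
Proof.
move=> klt xP.
have nR : ~ Rs (x |: P k) (~: Cc k).
  apply: (F0 klt); last exact: nC.
  by apply/subsetP => y; rewrite in_setU1 => /orP[/eqP->|].
have nR' : ~ Rs (P k) (n x |: ~: Cc k) := fun h => nR ((NL2 _ _ _).1 h).
have [_ h] := M klt nR' (subxx _) (fun y yn => ltac:(by rewrite in_setU1 in_setC yn orbT)).
by apply: h; rewrite in_setU1 eqxx.
Qed.

Lemma a2 k x : k < size s -> n x \notin Cc k -> x \in P k.
Proof.
move=> klt nxC.
have nR : ~ Rs (P k) (n x |: ~: Cc k).
  apply: (F0 klt) => // y; rewrite in_setU1 => /orP[/eqP->|] //; exact: nC.
have nR' : ~ Rs (x |: P k) (~: Cc k) := fun h => nR ((NL2 _ _ _).2 h).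
have [h _] := M klt nR' (subsetU1 _ _) (fun y yn => ltac:(by rewrite in_setC yn)).
by apply: (subsetP h); rewrite in_setU1 eqxx.
Qed.

Lemma b1 k y : k < size s -> y \notin Cc k -> n y \in P k.
Proof.
move=> klt yC.
have nR : ~ Rs (P k) (y |: ~: Cc k).
  apply: (F0 klt) => // z; rewrite in_setU1 => /orP[/eqP->|] //; exact: nC.
have nR' : ~ Rs (n y |: P k) (~: Cc k) := fun h => nR ((NL1 _ _ _).1 h).
have [h _] := M klt nR' (subsetU1 _ _) (fun z zn => ltac:(by rewrite in_setC zn)).
by apply: (subsetP h); rewrite in_setU1 eqxx.
Qed.

Lemma b2 k y : k < size s -> n y \in P k -> y \notin Cc k.
Proof.
move=> klt nyP.
have nR : ~ Rs (n y |: P k) (~: Cc k).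
  apply: (F0 klt); last exact: nC.
  by apply/subsetP => z; rewrite in_setU1 => /orP[/eqP->|].
have nR' : ~ Rs (P k) (y |: ~: Cc k) := fun h => nR ((NL1 _ _ _).2 h).
have [_ h] := M klt nR' (subxx _) (fun z zn => ltac:(by rewrite in_setU1 in_setC zn orbT)).
by apply: h; rewrite in_setU1 eqxx.
Qed.

End Core.

Theorem theorem7p8
  (V : finType) (one zero : V) (Hoz : one != zero)
  (R : truth_rel V) (HR : intersective one zero R)
  (C : Type) (ar : C -> nat) (I : forall c : C, ('I_(ar c) -> V) -> V)
  (Hce : constant_expressive I)
  (neg : C) (Hneg : G_negation I R neg)
  (s : seq ({set V} * {set V})) (Hmin : minimal_representation one zero R s) :
  (forall i j : nat, i < size s -> j < size s -> i != j ->
     ~~ ((nth (set0, set0) s i).1 \subset (nth (set0, set0) s j).1) /\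
     ~~ ((nth (set0, set0) s i).2 \subset (nth (set0, set0) s j).2)) /\
  (forall i j : nat, i < size s -> j < size s ->
     (((nth (set0, set0) s i).1 \subset (nth (set0, set0) s j).2) ->
        ((nth (set0, set0) s j).1 \subset (nth (set0, set0) s i).2)) /\
     (((nth (set0, set0) s j).2 \subset (nth (set0, set0) s i).1) ->
        ((nth (set0, set0) s i).2 \subset (nth (set0, set0) s j).1))).
Proof.
have [Hrep Hsz] := Hmin.
have A1 := a1 Hrep Hsz Hce Hneg. have A2 := a2 Hrep Hsz Hce Hneg.
have B1 := b1 Hrep Hsz Hce Hneg. have B2 := b2 Hrep Hsz Hce Hneg.
have Co := core Hrep Hsz.
split.
  move=> i j ilt jlt nij; split; apply/negP => sub.
    have e : i = j; last by rewrite e eqxx in nij.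
    apply: Co => //; apply/subsetP => y yCj; apply/negPn/negP => ynC.
    have := B1 _ _ ilt ynC => /(subsetP sub) /(B2 _ _ jlt).
    by rewrite yCj.
  have e : j = i; last by rewrite e eqxx in nij.
  apply: Co => //; apply/subsetP => x xP.
  apply: (A2 _ _ ilt); apply/negP => nC.
  by move: (A1 _ _ jlt xP); rewrite (subsetP sub _ nC).
move=> i j ilt jlt; split => sub.
  apply/subsetP => x xP; apply/negPn/negP => xC.
  have := B1 _ _ ilt xC => /(subsetP sub) nxC.
  by move: (A1 _ _ jlt xP); rewrite nxC.
apply/subsetP => x xC; apply/negPn/negP => xP.
have nxC : n I neg x \in (nth (set0, set0) s j).2.
  by apply/negPn/negP => h; move: xP; rewrite (A2 _ _ jlt h).
by move: (B2 _ _ ilt (subsetP sub _ nxC)); rewrite xC.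
Qed.
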